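(* Let $G$ be a graph on $[n]$ and let $e$ and $f$ be two crossing edges of $G$. Then $e$ and $f$ are crossing closed if and only if the join $e\vee f$ exists in $NC_G$. When $e$ and $f$ are crossing closed, $e\vee f$ is the bond whose edge set is $E(J(e,f))$, and $J(e,f)$ is the unique non-trivial connected component of $e\vee f$. Furthermore, $G$ is crossing closed if and only if $e\vee f$ exists in $NC_G$ for every pair of crossing edges $e,f$ of $G$.
   Context: All graphs are finite simple graphs with vertex set $[n]=\{1,\dots,n\}$; edges are written $ij$ with $i<j$. Two edges $a_1a_2$ and $b_1b_2$ cross if $a_1<b_1<a_2<b_2$ or $b_1<a_1<b_2<a_2$. A spanning subgraph is identified with its edge set. A bond of $G$ is a spanning subgraph of $G$ each of whose connected components is an induced subgraph of $G$. For a bond $H$, $\pi(H)$ is the set partition of $[n]$ whose blocks are the vertex sets of the connected components of $H$. A set partition is crossing if there are distinct blocks $B,B'$ and $a,c\in B$, $b,d\in B'$ with $a<b<c<d$, and noncrossing otherwise; a bond $H$ is noncrossing if $\pi(H)$ is noncrossing. $NC_G$ is the poset of noncrossing bonds of $G$ ordered by inclusion of edge sets. For an edge $e$, $e$ also denotes the bond with edge set $\{e\}$ (an element of $NC_G$). Two crossing edges $e,f$ are crossing closed if among all induced connected subgraphs of $G$ containing both $e$ and $f$ there is a unique one minimal with respect to containment, denoted $J(e,f)$; $G$ is crossing closed if every pair of crossing edges of $G$ is crossing closed. *)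

(* Defs.v *)
(* Vertices [n] are represented by 'I_n (0-indexed; the
   order is the same as on {1..n}). A simple graph is its edge set E of
   pairs (i,j) with i < j. A spanning subgraph is an edge set H. *)
From mathcomp Require Import all_boot.
Set Implicit Arguments. Unset Strict Implicit. Unset Printing Implicit Defensive.

Section Defs.
Variable n : nat.
Notation edge := ('I_n * 'I_n)%type.

Definition simple_graph (E : {set edge}) := forall p, p \in E -> (p.1 < p.2)%N.

Definition adj (H : {set edge}) : rel 'I_n :=
  fun x y => ((x, y) \in H) || ((y, x) \in H).

Definition conn (H : {set edge}) (x y : 'I_n) : bool := connect (adj H) x y.

(* H is a bond of G (edge set E): H is a spanning subgraph of G and every
   connected component of H is an induced subgraph of G *)
Definition is_bond (E H : {set edge}) :=
  H \subset E /\ forall x y : 'I_n, conn H x y -> (x, y) \in E -> (x, y) \in H.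

Definition noncrossing (H : {set edge}) :=
  forall a b c d : 'I_n, (a < b)%N -> (b < c)%N -> (c < d)%N ->
    conn H a c -> conn H b d -> conn H a b.

Definition in_NC (E H : {set edge}) := is_bond E H /\ noncrossing H.

Definition is_join (E : {set edge}) (e f : edge) (J : {set edge}) :=
  in_NC E J /\ [set e] \subset J /\ [set f] \subset J /\
  forall K, in_NC E K -> [set e] \subset K -> [set f] \subset K -> J \subset K.

Definition join_exists (E : {set edge}) (e f : edge) := exists J, is_join E e f J.

Definition crossing (e f : edge) : bool :=
  [&& (e.1 < f.1)%N, (f.1 < e.2)%N & (e.2 < f.2)%N] ||
  [&& (f.1 < e.1)%N, (e.1 < f.2)%N & (f.2 < e.2)%N].

Definition induced_edges (E : {set edge}) (S : {set 'I_n}) : {set edge} :=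
  [set p in E | (p.1 \in S) && (p.2 \in S)].

Definition induced_connected (E : {set edge}) (S : {set 'I_n}) :=
  forall x y, x \in S -> y \in S -> connect (adj (induced_edges E S)) x y.

Definition ics_containing (E : {set edge}) (e f : edge) (S : {set 'I_n}) :=
  induced_connected E S /\
  [/\ e.1 \in S, e.2 \in S, f.1 \in S & f.2 \in S].

(* G[S] is minimal w.r.t. containment among such subgraphs (an induced
   subgraph is determined by its vertex set, and containment of induced
   subgraphs is containment of vertex sets) *)
Definition minimal_ics (E : {set edge}) (e f : edge) (S : {set 'I_n}) :=
  ics_containing E e f S /\
  forall T, ics_containing E e f T -> T \subset S -> T = S.

(* e, f crossing closed: there is a unique minimal one (its vertex set is J(e,f)) *)
Definition crossing_closed_pair (E : {set edge}) (e f : edge) :=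
  exists S, minimal_ics E e f S /\ forall T, minimal_ics E e f T -> T = S.

Definition crossing_closed_graph (E : {set edge}) :=
  forall e f, e \in E -> f \in E -> crossing e f -> crossing_closed_pair E e f.

End Defs.

(* Main.v *)
Require Import Defs.
From mathcomp Require Import all_boot.
From Stdlib Require Import Classical.
Set Implicit Arguments. Unset Strict Implicit. Unset Printing Implicit Defensive.

Section H.
Variable n : nat.
Variable E : {set 'I_n * 'I_n}.
Hypothesis HE : simple_graph E.
Implicit Types (H K : {set 'I_n * 'I_n}) (x y : 'I_n) (e f p : 'I_n * 'I_n).

Lemma adj_sym H : symmetric (adj H).
Proof. by move=> x y; rewrite /adj orbC. Qed.

Lemma conn_sym H x y : conn H x y = conn H y x.
Proof. by rewrite /conn (sym_connect_sym (@adj_sym H)). Qed.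

Lemma conn_trans H x y z : conn H x y -> conn H y z -> conn H x z.
Proof. exact: connect_trans. Qed.

Lemma conn_mono H H' x y : H \subset H' -> conn H x y -> conn H' x y.
Proof.
move=> /subsetP sub; apply: connect_sub => u v; rewrite /adj => /orP[h|h];
  apply: connect1; rewrite /adj (sub _ h) ?orbT //.
Qed.

Lemma conn_edge H p : p \in H -> conn H p.1 p.2.
Proof. by move=> h; apply: connect1; rewrite /adj -surjective_pairing h. Qed.

Lemma conn_endpoint H (S : {set 'I_n}) x y :
  (forall p, p \in H -> p.1 \in S /\ p.2 \in S) -> conn H x y -> x != y -> x \in S.
Proof.
move=> HS /connectP [[|z p] /= pth ->]; first by rewrite eqxx.
move=> _; move/andP: pth => [a _]; move: a; rewrite /adj => /orP[h|h].
  by case: (HS _ h).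
by case: (HS _ h).
Qed.

Lemma ind_edges_in (S : {set 'I_n}) p :
  p \in induced_edges E S -> p.1 \in S /\ p.2 \in S.
Proof. by rewrite inE => /andP[_ /andP[]]. Qed.

Lemma ind_NC (S : {set 'I_n}) : induced_connected E S -> in_NC E (induced_edges E S).
Proof.
move=> Hc; split; first split.
- by apply/subsetP => p; rewrite inE => /andP[].
- move=> x y c hxy.
  have lt := HE hxy; rewrite /= in lt.
  have nxy : x != y by apply/eqP => eq; rewrite eq ltnn in lt.
  have xS := conn_endpoint (@ind_edges_in S) c nxy.
  have yS : y \in S.
    apply: (conn_endpoint (@ind_edges_in S) (x := y) (y := x)); first by rewrite conn_sym.
    by rewrite eq_sym.
  by rewrite inE hxy xS yS.
- move=> a b c d hab hbc hcd hac hbd.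
  have nac : a != c.
    by apply/eqP => eq; move: (ltn_trans hab hbc); rewrite eq ltnn.
  have nbd : b != d.
    by apply/eqP => eq; move: (ltn_trans hbc hcd); rewrite eq ltnn.
  apply: Hc.
  exact: (conn_endpoint (@ind_edges_in S) hac nac).
  exact: (conn_endpoint (@ind_edges_in S) hbd nbd).
Qed.

Lemma ics_sub_bond K (S : {set 'I_n}) (x0 : 'I_n) :
  is_bond E K -> (forall y, y \in S -> conn K x0 y) -> induced_edges E S \subset K.
Proof.
move=> [_ Hb] HS; apply/subsetP => p; rewrite inE => /andP[pE /andP[h1 h2]].
rewrite [p]surjective_pairing; apply: Hb; last by rewrite -surjective_pairing.
by apply: (conn_trans (y := x0)); [rewrite conn_sym|]; apply: HS.
Qed.

Lemma comp_ic K (x0 : 'I_n) : K \subset E -> induced_connected E [set y | conn K x0 y].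
Proof.
move=> /subsetP KE.
set C := [set y | conn K x0 y].
have key : forall y, conn K x0 y -> connect (adj (induced_edges E C)) x0 y.
  move=> y /connectP [p pth ->].
  suff gen : forall (q : seq 'I_n) x, conn K x0 x -> connect (adj (induced_edges E C)) x0 x ->
      path (adj K) x q -> connect (adj (induced_edges E C)) x0 (last x q).
    by apply: gen pth; exact: connect0.
  elim => [|z q IH] x kx cx /= pth2 //.
  move/andP: pth2 => [axz pth2].
  have kz : conn K x0 z by apply: (conn_trans kx); exact: connect1.
  apply: (IH z kz _ pth2).
  apply: (connect_trans cx); apply: connect1.
  move: axz; rewrite /adj => /orP[h|h].
    by rewrite /adj inE (KE _ h) /= !inE kx kz.
  by rewrite /adj [(z, x) \in _]inE (KE _ h) /= !inE kx kz orbT.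
move=> x y; rewrite !inE => hx hy.
apply: (connect_trans (y := x0)); last exact: key.
by rewrite (sym_connect_sym (@adj_sym _)); exact: key.
Qed.

Lemma ef_conn K e f : in_NC E K -> e \in K -> f \in K -> crossing e f -> conn K e.1 f.1.
Proof.
move=> [_ nc] he hf; rewrite /crossing => /orP[/and3P[a b c]|/and3P[a b c]].
  exact: (nc _ _ _ _ a b c (conn_edge he) (conn_edge hf)).
rewrite conn_sym; exact: (nc _ _ _ _ a b c (conn_edge hf) (conn_edge he)).
Qed.

Lemma minimal_exists e f (C : {set 'I_n}) :
  ics_containing E e f C -> exists T, minimal_ics E e f T /\ T \subset C.
Proof.
move: {2}#|C| (leqnn #|C|) => k; elim: k C => [|k IH] C hk hC.
  have C0 : C = set0 by apply/eqP; rewrite -cards_eq0 -leqn0.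
  by move: hC => [_ [h _ _ _]]; rewrite C0 inE in h.
case: (classic (forall T, ics_containing E e f T -> T \subset C -> T = C)) => h.
  by exists C; split => //; split.
move: (not_all_ex_not _ _ h) => [T hT].
have [iT hT'] : ics_containing E e f T /\ ~ (T \subset C -> T = C).
  split; first by apply: NNPP => ?; apply: hT.
  by move=> x; apply: hT.
have sTC : T \subset C by apply: NNPP => ns; apply: hT' => s; case: (ns s).
have nTC : T != C by apply/eqP => eq; apply: hT' .
have pr : T \proper C by rewrite properEneq nTC sTC.
have lt : #|T| <= k.
  by move: (proper_card pr) => p; rewrite -ltnS (leq_trans p hk).
have [T' [mT' sT']] := IH T lt iT.
by exists T'; split => //; apply: subset_trans sT' sTC.
Qed.

End H.

Section Main.
Variable n : nat.
Variable E : {set 'I_n * 'I_n}.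
Hypothesis HE : simple_graph E.

Lemma comp_ics K e f : in_NC E K -> e \in K -> f \in K -> crossing e f ->
  ics_containing E e f [set y | conn K e.1 y].
Proof.
move=> hK he hf cr; split; first by apply: comp_ic; case: hK => [[]].
have c1 := ef_conn hK he hf cr.
rewrite !inE; split.
- exact: connect0.
- exact: conn_edge he.
- exact: c1.
- exact: conn_trans c1 (conn_edge hf).
Qed.

Lemma ind_has e (S : {set 'I_n}) : e \in E -> e.1 \in S -> e.2 \in S ->
  [set e] \subset induced_edges E S.
Proof. by move=> a b c; rewrite sub1set inE a b c. Qed.

Lemma join_of_unique e f (S : {set 'I_n}) : e \in E -> f \in E -> crossing e f ->
  minimal_ics E e f S -> (forall T, minimal_ics E e f T -> T = S) ->
  is_join E e f (induced_edges E S).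
Proof.
move=> he hf cr mS uS.
have [[icS [e1 e2 f1 f2]] _] := mS.
split; first exact: ind_NC.
split; first exact: ind_has.
split; first exact: ind_has.
move=> K hK; rewrite !sub1set => eK fK.
have [T [mT sT]] := minimal_exists (comp_ics hK eK fK cr).
rewrite (uS T mT) in sT.
apply: (ics_sub_bond (x0 := e.1)); first by case: hK.
by move=> y /(subsetP sT); rewrite inE.
Qed.

Lemma part1 e f : e \in E -> f \in E -> crossing e f ->
  (crossing_closed_pair E e f <-> join_exists E e f).
Proof.
move=> he hf cr; split.
  move=> [S [mS uS]]; exists (induced_edges E S); exact: join_of_unique.
move=> [J [hJ [eJ [fJ lJ]]]].
move: eJ fJ; rewrite !sub1set => eJ fJ.
set C := [set y | conn J e.1 y].
have iC := comp_ics hJ eJ fJ cr.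
have claim : forall T, minimal_ics E e f T -> T = C.
  move=> T [[icT [e1 e2 f1 f2]] mT].
  have sJ : J \subset induced_edges E T.
    apply: lJ; [exact: ind_NC | exact: ind_has | exact: ind_has].
  apply/esym; apply: mT => //.
  apply/subsetP => y; rewrite inE => cy.
  case: (eqVneq y e.1) => [->|ny] //.
  apply: (conn_endpoint (@ind_edges_in _ E T) (y := e.1)).
    by rewrite conn_sym; exact: conn_mono sJ cy.
  exact: ny.
have [T0 [mT0 _]] := minimal_exists iC.
exists C; split; last exact: claim.
by rewrite -(claim T0 mT0).
Qed.

End Main.

Theorem theorem2p5 (n : nat) (E : {set 'I_n * 'I_n}) (HE : simple_graph E) :
  (forall e f, e \in E -> f \in E -> crossing e f ->
     (crossing_closed_pair E e f <-> join_exists E e f) /\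
     (crossing_closed_pair E e f ->
        forall S, minimal_ics E e f S ->
          is_join E e f (induced_edges E S) /\
          (forall x y, x \in S -> y \in S -> conn (induced_edges E S) x y) /\
          (forall x y, x != y -> conn (induced_edges E S) x y -> x \in S)))
  /\
  (crossing_closed_graph E <->
     forall e f, e \in E -> f \in E -> crossing e f -> join_exists E e f).
Proof.
split.
  move=> e f he hf cr; split; first exact: part1.
  move=> [S0 [mS0 uS0]] S mS.
  have eS : S = S0 by apply: uS0.
  split.
    apply: join_of_unique => // T mT; rewrite eS; exact: uS0.
  split; first by move: mS => [[icS _] _].
  move=> x y nxy c; exact: (conn_endpoint (@ind_edges_in _ E S) c nxy).
split.
  by move=> h e f he hf cr; apply/(part1 HE he hf cr); apply: h.
by move=> h e f he hf cr; apply/(part1 HE he hf cr); apply: h.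
Qed.
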